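(* For every instance such that $|S_2|>\pi_1+\pi_3+\pi_4-1$, $|S_2|\ge 4$ and $|S_2|$ is even, we have $H^{PW''}\le \tfrac{32000}{16947}H^*$ (note $\tfrac{32000}{16947}\approx 1.888$).
   Context: An instance consists of an integer $n\ge 1$ and growth rates $1=h(1)\ge h(2)\ge\cdots\ge h(n)>0$ of bamboos $b_1,\dots,b_n$. Bamboo Garden Trimming (discrete version): - All heights are $0$ initially. - On each day $t=1,2,\dots$ every bamboo $b_j$ grows by $h(j)$. - At the end of each day the gardener cuts exactly one bamboo $\sigma(t)\in\{1,\dots,n\}$ back to height $0$. The height of a schedule $\sigma:\mathbb{N}\to\{1,\dots,n\}$ is the supremum, over all days $t$ and all $j$, of the height of $b_j$ at the end of day $t$ just before the cut. $H^*$ denotes the infimum of this height over all schedules. Value of algorithm PW'': - Split $\{1,\dots,n\}$ into four sets: - $S_1=\{j: \tfrac23<h(j)\le 1\}$; - $S_2=\{j:\tfrac12<h(j)\le\tfrac23\}$; - $S_3=\{j: h(j)\le\tfrac12 \text{ and } \tfrac23 2^{-k}<h(j)\le 2^{-k}\text{ for some integer }k\ge1\}$; - $S_4=\{j: h(j)\le\tfrac12\text{ and } 2^{-(k+1)}<h(j)\le \tfrac23 2^{-k}\text{ for some integer }k\ge 1\}$. - Modified growths: $h''(j)=2^{-k}$ for $j\in S_3$ and $h''(j)=\tfrac23 2^{-k}$ for $j\in S_4$, with $k$ as in the definition of the set. - Let $\pi_1=|S_1|$, $sh_3=\sum_{j\in S_3}h''(j)$, $sh_4=\sum_{j\in S_4}h''(j)$,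 $\pi_3=\lfloor sh_3\rfloor$, $\pi_4=\lfloor sh_4\rfloor$, $f_3=sh_3-\pi_3$, $f_4=sh_4-\pi_4$. - Option (a): $\pi_R(a)=\lceil f_3+f_4\rceil$ and $z(a)=\pi_1+|S_2|+\pi_3+\pi_4+\pi_R(a)$. - Option (b): if $S_2=\emptyset$ put $z(b)=+\infty$. Otherwise let $h^*=\max_{j\in S_2}h(j)$ and $f_2=\tfrac12$ if $|S_2|$ is odd, $f_2=0$ if $|S_2|$ is even. Then $\pi_R(b)=\lceil f_2+f_3+f_4\rceil$ and $z(b)=2h^*\,(\pi_1+\lfloor |S_2|/2\rfloor+\pi_3+\pi_4+\pi_R(b))$. - The value returned by algorithm PW'' is $H^{PW''}=\min\{z(a),z(b)\}$. The paper takes this as the maximum height of the periodic pinwheel trimming schedule that it builds from these partitions. *)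

(* Defs.v *)
From Stdlib Require Import Reals Lra Lia ZArith Arith.
From Stdlib Require Import Classical ClassicalDescription.
Open Scope R_scope.

Definition valid_instance (n : nat) (h : nat -> R) : Prop :=
  (1 <= n)%nat /\ h 1%nat = 1 /\
  (forall j, (1 <= j)%nat -> (j < n)%nat -> h (S j) <= h j) /\
  0 < h n.

(* sigma t = bamboo cut at the end of day t (t >= 1). *)
Definition valid_schedule (n : nat) (sigma : nat -> nat) : Prop :=
  forall t, (1 <= t)%nat -> (1 <= sigma t)%nat /\ (sigma t <= n)%nat.

(* height of bamboo j at the end of day t, just before the cut of day t;
   day 0 is the initial state (height 0). *)
Fixpoint precut (h : nat -> R) (sigma : nat -> nat) (j t : nat) : R :=
  match t with
  | O => 0
  | S t' => (if Nat.eqb (sigma t') j then 0 else precut h sigma j t') + h j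
  end.

Definition height_bounded_by (n : nat) (h : nat -> R) (sigma : nat -> nat)
    (M : R) : Prop :=
  forall t j, (1 <= t)%nat -> (1 <= j)%nat -> (j <= n)%nat ->
    precut h sigma j t <= M.

Definition Rfloor (x : R) : R := IZR (Int_part x).
Definition Rceil (x : R) : R := - Rfloor (- x).

Definition inS1 (x : R) : Prop := 2/3 < x /\ x <= 1.
Definition inS2 (x : R) : Prop := 1/2 < x /\ x <= 2/3.
Definition inS3 (x : R) : Prop :=
  x <= 1/2 /\ exists k : nat, (1 <= k)%nat /\ 2/3 * (/2)^k < x /\ x <= (/2)^k.
Definition inS4 (x : R) : Prop :=
  x <= 1/2 /\ exists k : nat, (1 <= k)%nat /\ (/2)^(S k) < x /\ x <= 2/3 * (/2)^k.

(* the dyadic exponent k with 2^-(k+1) < x <= 2^-k, i.e. k = floor(-log2 x);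
   for x in S3 or S4 this is the k of the definition of the set. *)
Definition kexp (x : R) : nat := Z.to_nat (Int_part (- ln x / ln 2)).

Definition h3 (x : R) : R := (/2)^(kexp x).
Definition h4 (x : R) : R := 2/3 * (/2)^(kexp x).

Definition indic (P : Prop) (v : R) : R :=
  if excluded_middle_informative P then v else 0.

Fixpoint sum1 (n : nat) (f : nat -> R) : R :=
  match n with O => 0 | S m => sum1 m f + f (S m) end.

Fixpoint card1 (n : nat) (P : R -> Prop) (h : nat -> R) : nat :=
  match n with
  | O => O
  | S m => (card1 m P h + if excluded_middle_informative (P (h (S m))) then 1 else 0)%nat
  end.

(* max_{j in S2} h j (0 if S2 empty; only used when S2 is nonempty) *)
Fixpoint maxS2 (n : nat) (h : nat -> R) : R :=
  match n with
  | O => 0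
  | S m => if excluded_middle_informative (inS2 (h (S m)))
           then Rmax (maxS2 m h) (h (S m)) else maxS2 m h
  end.

Section PW.
Variables (n : nat) (h : nat -> R).

Definition pi1 : R := INR (card1 n inS1 h).
Definition s2 : nat := card1 n inS2 h.
Definition sh3 : R := sum1 n (fun j => indic (inS3 (h j)) (h3 (h j))).
Definition sh4 : R := sum1 n (fun j => indic (inS4 (h j)) (h4 (h j))).
Definition pi3 : R := Rfloor sh3.
Definition pi4 : R := Rfloor sh4.
Definition f3 : R := sh3 - pi3.
Definition f4 : R := sh4 - pi4.

Definition z_a : R := pi1 + INR s2 + pi3 + pi4 + Rceil (f3 + f4).

Definition f2 : R := if Nat.odd s2 then 1/2 else 0.
(* z_b, meaningful only when S2 is nonempty (otherwise z_b = +infinity) *)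
Definition z_b : R :=
  2 * maxS2 n h * (pi1 + INR (Nat.div2 s2) + pi3 + pi4 + Rceil (f2 + f3 + f4)).

Definition H_PW : R := if Nat.eqb s2 0 then z_a else Rmin z_a z_b.
End PW.

(* Main.v *)
Require Import Defs.
From Stdlib Require Import Reals Lra Lia Psatz ZArith Classical ClassicalDescription.
Open Scope R_scope.

Lemma sum1_ext n f g : (forall j, (1 <= j)%nat -> (j <= n)%nat -> f j = g j) ->
  sum1 n f = sum1 n g.
Proof.
  induction n; simpl; intros H; auto.
  rewrite IHn; [rewrite (H (S n)); [reflexivity|lia|lia]|].
  intros j ? ?; apply H; lia.
Qed.

Lemma sum1_le n f g : (forall j, (1 <= j)%nat -> (j <= n)%nat -> f j <= g j) ->
  sum1 n f <= sum1 n g.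
Proof.
  induction n; simpl; intros H; [lra|].
  assert (sum1 n f <= sum1 n g) by (apply IHn; intros; apply H; lia).
  assert (f (S n) <= g (S n)) by (apply H; lia). lra.
Qed.

Lemma sum1_le_bonus n f g b : (1 <= n)%nat ->
  (forall j, (1 <= j)%nat -> (j <= n)%nat -> f j <= g j) ->
  f 1%nat + b <= g 1%nat ->
  sum1 n f + b <= sum1 n g.
Proof.
  induction n; simpl; intros Hn H H1; [lia|].
  destruct n.
  - simpl. lra.
  - assert (sum1 (S n) f + b <= sum1 (S n) g) by (apply IHn; [lia| intros; apply H; lia | auto]).
    assert (f (S (S n)) <= g (S (S n))) by (apply H; lia). lra.
Qed.

Lemma sum1_plus n f g : sum1 n (fun j => f j + g j) = sum1 n f + sum1 n g.
Proof. induction n; simpl; [lra|]. rewrite IHn; lra. Qed.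

Lemma sum1_scal n a f : sum1 n (fun j => a * f j) = a * sum1 n f.
Proof. induction n; simpl; [lra|]. rewrite IHn; lra. Qed.

Lemma sum1_const n c : sum1 n (fun _ => c) = INR n * c.
Proof. induction n; simpl sum1; [simpl; lra|]. rewrite IHn, S_INR; lra. Qed.

Lemma sum_cut n p s : (1 <= s)%nat -> (s <= n)%nat ->
  sum1 n (fun j => if Nat.eqb s j then 0 else p j) = sum1 n p - p s.
Proof.
  induction n; intros H1 H2; [lia|].
  simpl sum1.
  destruct (Nat.eq_dec s (S n)) as [E|E].
  - subst s. rewrite Nat.eqb_refl.
    rewrite (sum1_ext n _ p); [lra|].
    intros j ? ?. destruct (Nat.eqb_spec (S n) j); [lia|auto].
  - rewrite IHn by lia. destruct (Nat.eqb_spec s (S n)); [lia|]. lra.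
Qed.

Lemma density n h sigma M :
  valid_schedule n sigma -> height_bounded_by n h sigma M ->
  sum1 n h <= M.
Proof.
  intros Hs Hb.
  set (H := sum1 n h).
  set (St t := sum1 n (fun j => precut h sigma j t)).
  assert (S1 : St 1%nat = H).
  { unfold St, H. apply sum1_ext. intros j _ _. simpl.
    destruct (Nat.eqb (sigma 0%nat) j); lra. }
  assert (Step : forall t, (1 <= t)%nat -> St (S t) >= St t + H - M).
  { intros t Ht. unfold St, H. simpl precut.
    rewrite sum1_plus.
    destruct (Hs t Ht) as [Ha Hb'].
    rewrite sum_cut by auto.
    assert (precut h sigma (sigma t) t <= M) by (apply Hb; auto). lra. }
  assert (Lin : forall t, St (S t) >= H + INR t * (H - M)).
  { induction t.
    - simpl INR. rewrite S1. lra.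
    - rewrite S_INR. specialize (Step (S t) ltac:(lia)). lra. }
  assert (Up : forall t, (1 <= t)%nat -> St t <= INR n * M).
  { intros t Ht. unfold St. rewrite <- sum1_const. apply sum1_le.
    intros j ? ?. apply Hb; auto. }
  destruct (Rle_or_lt H M) as [L|L]; auto.
  exfalso.
  destruct (INR_unbounded ((INR n * M - H) / (H - M))) as [t Ht].
  specialize (Lin t). specialize (Up (S t) ltac:(lia)).
  assert (INR t * (H - M) > INR n * M - H).
  { apply Rmult_gt_compat_r with (r := H - M) in Ht; [|lra].
    unfold Rdiv in Ht. rewrite Rmult_assoc, Rinv_l in Ht; lra. }
  lra.
Qed.
Lemma pow_half_pos k : 0 < (/2)^k.
Proof. apply pow_lt; lra. Qed.

Lemma ln_half_pow k : ln ((/2)^k) = - INR k * ln 2.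
Proof. rewrite ln_pow by lra. rewrite ln_Rinv by lra. ring. Qed.

Lemma ln_le' x y : 0 < x -> x <= y -> ln x <= ln y.
Proof. intros. destruct (Req_dec x y); [subst; lra|]. left; apply ln_increasing; lra. Qed.

Lemma kexp_spec x k : (/2)^(S k) < x -> x <= (/2)^k -> kexp x = k.
Proof.
  intros H1 H2.
  assert (P := pow_half_pos (S k)).
  assert (L2 : 0 < ln 2) by (pose proof ln_lt_2; lra).
  assert (A1 : ln ((/2)^(S k)) < ln x) by (apply ln_increasing; lra).
  assert (A2 : ln x <= ln ((/2)^k)) by (apply ln_le'; lra).
  rewrite !ln_half_pow, S_INR in *.
  set (y := - ln x / ln 2).
  assert (Y1 : INR k <= y).
  { unfold y. apply Rmult_le_reg_r with (ln 2); auto. unfold Rdiv.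
    rewrite Rmult_assoc, Rinv_l by lra. lra. }
  assert (Y2 : y < INR k + 1).
  { unfold y. apply Rmult_lt_reg_r with (ln 2); auto. unfold Rdiv.
    rewrite Rmult_assoc, Rinv_l by lra. lra. }
  unfold kexp. fold y.
  rewrite <- (Int_part_spec y (Z.of_nat k)).
  - apply Nat2Z.id.
  - rewrite <- INR_IZR_INZ. lra.
Qed.

Lemma S3_bound x : inS3 x -> h3 x <= 3/2 * x /\ 2/3 * (/2)^(kexp x) < x.
Proof.
  intros [_ [k [Hk [H1 H2]]]].
  assert (P := pow_half_pos k).
  assert (E : kexp x = k).
  { apply kexp_spec; auto. simpl. lra. }
  unfold h3; rewrite E. split; lra.
Qed.

Lemma S4_bound x : inS4 x -> h4 x <= 3/2 * x /\ x <= 2/3 * (/2)^(kexp x).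
Proof.
  intros [_ [k [Hk [H1 H2]]]].
  assert (P := pow_half_pos k).
  assert (E : kexp x = k).
  { apply kexp_spec; auto. lra. }
  unfold h4; rewrite E. simpl in H1. split; lra.
Qed.

Definition gel (x : R) : R :=
  2/3 * indic (inS1 x) 1 + indic (inS2 x) x + 2/3 * indic (inS3 x) (h3 x)
  + 2/3 * indic (inS4 x) (h4 x).

Lemma gel_le x : 0 <= x -> gel x <= x.
Proof.
  intros Hx. unfold gel, indic.
  destruct (excluded_middle_informative (inS1 x)) as [A|A];
  destruct (excluded_middle_informative (inS2 x)) as [B|B];
  destruct (excluded_middle_informative (inS3 x)) as [C|C];
  destruct (excluded_middle_informative (inS4 x)) as [D|D];
  try (pose proof (S3_bound x C));
  try (pose proof (S4_bound x D));
  unfold inS1, inS2 in *;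
  try (destruct C as [C _]); try (destruct D as [D _]); lra.
Qed.

Lemma gel_1 : gel 1 + 1/3 <= 1.
Proof.
  unfold gel, indic.
  destruct (excluded_middle_informative (inS1 1)) as [A|A];
  destruct (excluded_middle_informative (inS2 1)) as [B|B];
  destruct (excluded_middle_informative (inS3 1)) as [C|C];
  destruct (excluded_middle_informative (inS4 1)) as [D|D];
  unfold inS1, inS2 in *;
  try (destruct C as [C _]); try (destruct D as [D _]); lra.
Qed.
Lemma final (p1 fl3 fl4 sh3 sh4 hs k c M S : R) :
  fl3 <= sh3 -> sh3 < fl3 + 1 -> fl4 <= sh4 -> sh4 < fl4 + 1 ->
  0 <= fl3 -> 0 <= fl4 -> 0 <= p1 -> p1 + fl3 + fl4 <= 2*k -> 2 <= k ->
  c <= (sh3 - fl3) + (sh4 - fl4) + 1 -> 1/2 < hs -> hs <= 2/3 ->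
  S >= 1/3 + 2/3*p1 + (k - 1/2 + hs) + 2/3*sh3 + 2/3*sh4 -> S <= M ->
  2*hs*(p1 + k + fl3 + fl4 + c) <= 32000/16947 * M.
Proof.
  intros.
  set (A := p1 + fl3 + fl4). set (F := (sh3 - fl3) + (sh4 - fl4)).
  assert (HA : 0 <= A <= 2*k) by (unfold A; lra).
  assert (HF : 0 <= F < 2) by (unfold F; lra).
  assert (2*hs*(p1 + k + fl3 + fl4 + c) <= 2*hs*(A + k + F + 1)).
  { apply Rmult_le_compat_l; unfold A, F; lra. }
  assert (S >= 1/3 + 2/3*(A+F) + k - 1/2 + hs) by (unfold A, F; lra).
  assert (2*hs*(A + k + F + 1) <= 32000/16947 * (1/3 + 2/3*(A+F) + k - 1/2 + hs)).
  { set (t := hs - 1/2). assert (0 < t <= 1/6) by (unfold t; lra).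
    replace hs with (1/2 + t) by (unfold t; lra).
    nra. }
  lra.
Qed.

Lemma card_sum n (P : R -> Prop) h :
  sum1 n (fun j => indic (P (h j)) 1) = INR (card1 n P h).
Proof.
  induction n; simpl sum1; simpl card1; [simpl; lra|].
  rewrite IHn, plus_INR. unfold indic.
  destruct (excluded_middle_informative (P (h (S n)))); simpl; lra.
Qed.

Lemma S2_inv n h :
  0 <= sum1 n (fun j => indic (inS2 (h j)) (h j)) - INR (card1 n inS2 h)/2 /\
  maxS2 n h - 1/2 <= sum1 n (fun j => indic (inS2 (h j)) (h j)) - INR (card1 n inS2 h)/2 /\
  0 <= maxS2 n h <= 2/3 /\
  ((1 <= card1 n inS2 h)%nat -> 1/2 < maxS2 n h).
Proof.
  induction n.
  - simpl. split; [lra|]. split; [lra|]. split; [lra|]. lia.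
  - simpl sum1; simpl card1; simpl maxS2. rewrite plus_INR. unfold indic in *.
    destruct (excluded_middle_informative (inS2 (h (S n)))) as [A|A];
      destruct IHn as (I1 & I2 & I3 & I4); unfold inS2 in A; simpl INR.
    all: try rewrite Nat.add_0_r; unfold Rmax; try destruct (Rle_dec (maxS2 n h) (h (S n))); split; try lra; split; try lra; split; try lra; intros; try lra; apply I4; lia.
Qed.

Lemma h_lower n h : valid_instance n h -> forall j, (1 <= j)%nat -> (j <= n)%nat -> h n <= h j.
Proof.
  intros (Hn & H1 & Hd & Hp).
  assert (forall d j, (1 <= j)%nat -> (j + d = n)%nat -> h n <= h j).
  { induction d; intros j Hj E.
    - replace j with n by lia. lra.
    - assert (h n <= h (S j)) by (apply IHd; lia).
      assert (h (S j) <= h j) by (apply Hd; lia). lra. }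
  intros j Hj Hjn. apply (H (n - j)%nat); lia.
Qed.

Lemma floor_props x : 0 <= x -> 0 <= Rfloor x /\ Rfloor x <= x /\ x < Rfloor x + 1.
Proof.
  intros Hx. unfold Rfloor. destruct (base_Int_part x) as [B1 B2].
  split; [|lra].
  assert (-1 < Int_part x)%Z.
  { apply lt_IZR. lra. }
  apply IZR_le. lia.
Qed.

Lemma ceil_le x : Rceil x <= x + 1.
Proof.
  unfold Rceil, Rfloor. destruct (base_Int_part (-x)). lra.
Qed.

Lemma sum_nonneg n f : (forall j, 0 <= f j) -> 0 <= sum1 n f.
Proof.
  intros H. induction n; simpl; [lra|]. specialize (H (S n)). lra.
Qed.

Lemma indic_nonneg P v : 0 <= v -> 0 <= indic P v.
Proof. unfold indic; destruct (excluded_middle_informative P); lra. Qed.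

Theorem proposition3 (n : nat) (h : nat -> R) :
  valid_instance n h ->
  INR (s2 n h) > pi1 n h + pi3 n h + pi4 n h - 1 ->
  (4 <= s2 n h)%nat ->
  Nat.even (s2 n h) = true ->
  forall (sigma : nat -> nat) (M : R),
    valid_schedule n sigma ->
    height_bounded_by n h sigma M ->
    H_PW n h <= 32000 / 16947 * M.
Proof.
  intros Hv Hlt H4 Hev sigma M Hs Hb.
  assert (Dens := density n h sigma M Hs Hb).
  assert (Hpos : forall j, (1 <= j)%nat -> (j <= n)%nat -> 0 <= h j).
  { intros j ? ?. pose proof (h_lower n h Hv j ltac:(lia) ltac:(lia)).
    destruct Hv as (_ & _ & _ & Hp). lra. }
  destruct Hv as (Hn & H1 & Hd & Hp).
  assert (Sg : sum1 n (fun j => gel (h j)) + 1/3 <= sum1 n h).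
  { apply sum1_le_bonus; auto.
    - intros j ? ?. apply gel_le. apply Hpos; auto.
    - rewrite H1. apply gel_1. }
  assert (Eg : sum1 n (fun j => gel (h j)) =
     2/3 * INR (card1 n inS1 h) + sum1 n (fun j => indic (inS2 (h j)) (h j))
     + 2/3 * sh3 n h + 2/3 * sh4 n h).
  { unfold gel, sh3, sh4.
    rewrite (sum1_plus n (fun j => 2 / 3 * indic (inS1 (h j)) 1 + indic (inS2 (h j)) (h j) +
        2 / 3 * indic (inS3 (h j)) (h3 (h j))) (fun j => 2 / 3 * indic (inS4 (h j)) (h4 (h j)))).
    rewrite (sum1_plus n (fun j => 2 / 3 * indic (inS1 (h j)) 1 + indic (inS2 (h j)) (h j))
        (fun j => 2 / 3 * indic (inS3 (h j)) (h3 (h j)))).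
    rewrite (sum1_plus n (fun j => 2 / 3 * indic (inS1 (h j)) 1) (fun j => indic (inS2 (h j)) (h j))).
    rewrite !sum1_scal, card_sum. reflexivity. }
  destruct (S2_inv n h) as (I1 & I2 & I3 & I4).
  fold (s2 n h) in *.
  assert (Hms : 1/2 < maxS2 n h) by (apply I4; lia).
  apply Nat.even_spec in Hev. destruct Hev as [k Hk].
  assert (Hsh3 : 0 <= sh3 n h).
  { unfold sh3. apply sum_nonneg. intros j. apply indic_nonneg. unfold h3.
    left; apply pow_half_pos. }
  assert (Hsh4 : 0 <= sh4 n h).
  { unfold sh4. apply sum_nonneg. intros j. apply indic_nonneg. unfold h4.
    pose proof (pow_half_pos (kexp (h j))). lra. }
  destruct (floor_props _ Hsh3) as (F31 & F32 & F33).
  destruct (floor_props _ Hsh4) as (F41 & F42 & F43).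
  assert (Hp1 : 0 <= pi1 n h) by (unfold pi1; apply pos_INR).
  (* integrality *)
  assert (HA : pi1 n h + pi3 n h + pi4 n h <= INR (s2 n h)).
  { clear -Hlt. unfold pi1, pi3, pi4, Rfloor in *.
    rewrite !INR_IZR_INZ in *.
    rewrite <- !plus_IZR in *.
    apply IZR_le.
    assert (Z.of_nat (card1 n inS1 h) + Int_part (sh3 n h) + Int_part (sh4 n h)
            < Z.of_nat (s2 n h) + 1)%Z.
    { apply lt_IZR. rewrite !plus_IZR in *. simpl (IZR 1). lra. }
    lia. }
  assert (Hs2k : INR (s2 n h) = 2 * INR k) by (rewrite Hk, mult_INR; simpl; lra).
  assert (Hk2 : 2 <= INR k).
  { assert (2 <= k)%nat by lia. apply le_INR in H. simpl in H. lra. }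
  unfold H_PW.
  destruct (Nat.eqb_spec (s2 n h) 0) as [E|E]; [lia|].
  eapply Rle_trans; [apply Rmin_r|].
  unfold z_b, f2.
  assert (Hodd : Nat.odd (s2 n h) = false).
  { rewrite <- Nat.negb_even. rewrite Hk. rewrite Nat.even_mul. reflexivity. }
  rewrite Hodd.
  rewrite Hk at 1. rewrite Nat.div2_double.
  pose proof (ceil_le (0 + f3 n h + f4 n h)) as Hc.
  unfold f3, f4, pi3, pi4 in *.
  apply (final (pi1 n h) (Rfloor (sh3 n h)) (Rfloor (sh4 n h)) (sh3 n h) (sh4 n h)
           (maxS2 n h) (INR k) (Rceil (0 + (sh3 n h - Rfloor (sh3 n h)) + (sh4 n h - Rfloor (sh4 n h))))
           M (sum1 n h)); try lra.
  unfold pi1 in *. lra.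
Qed.
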